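(* Let $T\in(0,\infty]$, let $f\in C([0,T)\times\bar U_K)$ be tilted (i.e. for every $t$, and all $x,y\in\bar U_K$ with $y-x\in\bar U_K^*$, one has $f(t,x)\le f(t,y)$), let $(t,x)\in(0,T)\times\partial U_K$, and let $\phi\in C^\infty((0,T)\times\bar U_K)$ be such that $(t,x)$ is a local maximum of $f-\phi$. Then \[ \inf_{\nu\in\mathbf n(x)}\nu\cdot\nabla\phi(t,x)\le0. \]
   Context: Fix integers $D,K\ge1$. Either $\mathcal C=(0,\infty)^D$, $\bar{\mathcal C}=\mathbb{R}_+^D$, $\mathcal E=\mathbb{R}^D$ with the Euclidean inner product, or $\mathcal C=S^D_{++}$ (positive definite symmetric $D\times D$ matrices), $\bar{\mathcal C}=S^D_+$ (positive semidefinite), $\mathcal E=S^D$ with $a\cdot b=\mathrm{tr}(a^*b)$; $|a|=(a\cdot a)^{1/2}$ and $x\le y$ means $y-x\in\bar{\mathcal C}$. $U_K=\{x=(x_1,\dots,x_K)\in\mathcal C^K: x_{k+1}-x_k\in\mathcal C\ \forall k\le K-1\}$, $\bar U_K=\{x\in\bar{\mathcal C}^K: x_1\le\dots\le x_K\}$ (its closure), $\partial U_K=\bar U_K\setminus U_K$. On $\mathcal E^K$, $x\cdot y=\sum_k x_k\cdot y_k$, $|x|=(x\cdot x)^{1/2}$, $\bar U_K^*=\{x\in\mathcal E^K: x\cdot v\ge0\ \forall v\in\bar U_K\}$, and for $x\in\partial U_K$, $\mathbf n(x)=\{\nu\in\mathcal E^K:|\nu|=1,\ (y-x)\cdot\nu\le0\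 \forall y\in\bar U_K\}$. $\nabla\phi=(\partial_{x_1}\phi,\dots,\partial_{x_K}\phi)$. *)

(* Defs.v *)
From HB Require Import structures.
From mathcomp Require Import all_boot all_order all_algebra.
From mathcomp Require Import all_classical all_reals all_analysis.
Set Implicit Arguments. Unset Strict Implicit. Unset Printing Implicit Defensive.
Import Order.TTheory GRing.Theory Num.Theory.
Import numFieldNormedType.Exports.
Local Open Scope classical_set_scope.
Local Open Scope ring_scope.

(* The two settings of the paper:
   Orthant : C = (0,oo)^D,  E = R^D  (an element of E is a 1 x D row matrix)
   PSD     : C = S^D_{++},  E = S^D  (an element of E is a D x D matrix)     *)
Inductive setting := Orthant | PSD.

Definition Edim (s : setting) (D : nat) : nat :=
  match s with Orthant => 1%N | PSD => D end.

(* A point x = (x_1,...,x_K) of E^K is represented (inside an ambient matrix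
   space) as a (K * Edim s D) x D matrix, whose k-th block is x_k. *)
Definition EK (R : realType) (s : setting) (K D : nat) :=
  'M[R]_(K * Edim s D, D).

Definition comp (R : realType) (s : setting) (K D : nat) (k : 'I_K)
  (x : EK R s K D) : 'M[R]_(Edim s D, D) :=
  \matrix_(i < Edim s D, j < D) x (mxvec_index k i) j.

Definition inE (R : realType) (s : setting) (D : nat) : 'M[R]_(Edim s D, D) -> Prop :=
  match s return 'M[R]_(Edim s D, D) -> Prop with
  | Orthant => fun _ => True
  | PSD => fun a => a^T = a
  end.

Definition inC (R : realType) (s : setting) (D : nat) : 'M[R]_(Edim s D, D) -> Prop :=
  match s return 'M[R]_(Edim s D, D) -> Prop with
  | Orthant => fun a => forall j, 0 < a ord0 j
  | PSD => fun a => a^T = a /\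
      forall v : 'rV[R]_D, v != 0 -> 0 < (v *m a *m v^T) ord0 ord0
  end.

Definition inCbar (R : realType) (s : setting) (D : nat) : 'M[R]_(Edim s D, D) -> Prop :=
  match s return 'M[R]_(Edim s D, D) -> Prop with
  | Orthant => fun a => forall j, 0 <= a ord0 j
  | PSD => fun a => a^T = a /\
      forall v : 'rV[R]_D, 0 <= (v *m a *m v^T) ord0 ord0
  end.

Definition inEK (R : realType) (s : setting) (K D : nat) (x : EK R s K D) : Prop :=
  forall k : 'I_K, inE (comp k x).

Definition U (R : realType) (s : setting) (K D : nat) : set (EK R s K D) :=
  [set x | (forall k : 'I_K, inC (comp k x)) /\
           (forall (k : 'I_K) (h : (k.+1 < K)%N),
               inC (comp (Ordinal h) x - comp k x))].

Arguments U {R} s K D.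

Definition Ubar (R : realType) (s : setting) (K D : nat) : set (EK R s K D) :=
  [set x | (forall k : 'I_K, inCbar (comp k x)) /\
           (forall (k : 'I_K) (h : (k.+1 < K)%N),
               inCbar (comp (Ordinal h) x - comp k x))].

Arguments Ubar {R} s K D.

Definition bdU (R : realType) (s : setting) (K D : nat) : set (EK R s K D) :=
  Ubar s K D `\` U s K D.

Arguments bdU {R} s K D.

(* inner product on E^K: sum_k x_k . y_k, with a . b = tr(a^* b) in the PSD
   case and the Euclidean product in the orthant case; both equal the sum of
   the entrywise products. *)
Definition dotEK (R : realType) (s : setting) (K D : nat) (x y : EK R s K D) : R :=
  \sum_(i < K * Edim s D) \sum_(j < D) x i j * y i j.

Definition normEK (R : realType) (s : setting) (K D : nat) (x : EK R s K D) : R :=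
  Num.sqrt (dotEK x x).

Definition Ubar_dual (R : realType) (s : setting) (K D : nat) : set (EK R s K D) :=
  [set x | inEK x /\ forall v, Ubar s K D v -> 0 <= dotEK x v].

Arguments Ubar_dual {R} s K D.

Definition normals (R : realType) (s : setting) (K D : nat) (x : EK R s K D)
  : set (EK R s K D) :=
  [set nu | inEK nu /\ normEK nu = 1 /\
            forall y, Ubar s K D y -> dotEK (y - x) nu <= 0].

Definition tilted (R : realType) (s : setting) (K D : nat) (T : \bar R)
  (f : R * EK R s K D -> R) : Prop :=
  forall t, 0 <= t -> (t%:E < T)%E ->
  forall x y, Ubar s K D x -> Ubar s K D y -> Ubar_dual s K D (y - x) ->
  f (t, x) <= f (t, y).

Fixpoint iter_dder (R : realType) (V : normedModType R) (vs : seq V) (g : V -> R)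
  : V -> R :=
  match vs with
  | [::] => g
  | v :: vs' => fun p => derive (iter_dder vs' g) p v
  end.

Definition smooth_on (R : realType) (V : normedModType R) (O : set V) (g : V -> R)
  : Prop :=
  open O /\ forall (vs : seq V) (p : V), O p -> differentiable (iter_dder vs g) p.

Definition dot_grad (R : realType) (s : setting) (K D : nat)
  (phi : R * EK R s K D -> R) (t : R) (x nu : EK R s K D) : R :=
  derive phi (t, x) (0, nu).

(* Main.v *)
Require Import Defs.
From HB Require Import structures.
From mathcomp Require Import all_boot all_order all_algebra.
From mathcomp Require Import all_classical all_reals all_analysis.
From mathcomp Require Import ring lra.
Import Order.TTheory GRing.Theory Num.Theory.
Import numFieldNormedType.Exports.
Local Open Scope classical_set_scope.
Local Open Scope ring_scope.
Set Implicit Arguments. Unset Strict Implicit. Unset Printing Implicit Defensive.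
Definition dotE {R : realType} {m n : nat} (a b : 'M[R]_(m, n)) : R :=
  \sum_(i < m) \sum_(j < n) a i j * b i j.

Definition Adm (R : realType) (s : setting) (D : nat) : 'M[R]_(Edim s D, D) -> Prop :=
  match s return 'M[R]_(Edim s D, D) -> Prop with
  | Orthant => fun A => forall j, A ord0 j = 0 \/ A ord0 j = 1
  | PSD => fun A => A^T = A /\ A *m A = A
  end.
Arguments Adm {R s D}.

Lemma Adm0 (R : realType) s D : Adm (0 : 'M[R]_(Edim s D, D)).
Proof. by case: s => /=; [move=> j; left; rewrite mxE | rewrite trmx0 mul0mx]. Qed.

Lemma dotEDl {R : realType} {m n : nat} (a b c : 'M[R]_(m, n)) :
  dotE (a + b) c = dotE a c + dotE b c.
Proof.
rewrite /dotE -big_split; apply: eq_bigr => i _; rewrite -big_split.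
by apply: eq_bigr => j _; rewrite mxE mulrDl.
Qed.

Lemma dotENl {R : realType} {m n : nat} (a c : 'M[R]_(m, n)) :
  dotE (- a) c = - dotE a c.
Proof.
rewrite /dotE -sumrN; apply: eq_bigr => i _; rewrite -sumrN.
by apply: eq_bigr => j _; rewrite mxE mulNr.
Qed.

Lemma dotEBl {R : realType} {m n : nat} (a b c : 'M[R]_(m, n)) :
  dotE (a - b) c = dotE a c - dotE b c.
Proof. by rewrite dotEDl dotENl. Qed.

Lemma dotEDr {R : realType} {m n : nat} (a b c : 'M[R]_(m, n)) :
  dotE c (a + b) = dotE c a + dotE c b.
Proof.
rewrite /dotE -big_split; apply: eq_bigr => i _; rewrite -big_split.
by apply: eq_bigr => j _; rewrite mxE mulrDr.
Qed.

Lemma dotENr {R : realType} {m n : nat} (a c : 'M[R]_(m, n)) :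
  dotE c (- a) = - dotE c a.
Proof.
rewrite /dotE -sumrN; apply: eq_bigr => i _; rewrite -sumrN.
by apply: eq_bigr => j _; rewrite mxE mulrN.
Qed.

Lemma dotEBr {R : realType} {m n : nat} (a b c : 'M[R]_(m, n)) :
  dotE c (a - b) = dotE c a - dotE c b.
Proof. by rewrite dotEDr dotENr. Qed.

Lemma dotE0l {R : realType} {m n : nat} (c : 'M[R]_(m, n)) : dotE 0 c = 0.
Proof. by rewrite /dotE big1 // => i _; rewrite big1 // => j _; rewrite mxE mul0r. Qed.

Lemma dotE0r {R : realType} {m n : nat} (c : 'M[R]_(m, n)) : dotE c 0 = 0.
Proof. by rewrite /dotE big1 // => i _; rewrite big1 // => j _; rewrite mxE mulr0. Qed.

Lemma dotEZl {R : realType} {m n : nat} (a : R) (b c : 'M[R]_(m, n)) :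
  dotE (a *: b) c = a * dotE b c.
Proof.
rewrite /dotE mulr_sumr; apply: eq_bigr => i _; rewrite mulr_sumr.
by apply: eq_bigr => j _; rewrite mxE mulrA.
Qed.

Lemma trD {R : realType} {m n : nat} (A B : 'M[R]_(m, n)) : (A + B)^T = A^T + B^T.
Proof. by apply/matrixP => i j; rewrite !mxE. Qed.
Lemma trN {R : realType} {m n : nat} (A : 'M[R]_(m, n)) : (- A)^T = - A^T.
Proof. by apply/matrixP => i j; rewrite !mxE. Qed.
Lemma trZ {R : realType} {m n : nat} (c : R) (A : 'M[R]_(m, n)) : (c *: A)^T = c *: A^T.
Proof. by apply/matrixP => i j; rewrite !mxE. Qed.

Lemma inCbarD (R : realType) s D (a b : 'M[R]_(Edim s D, D)) :
  inCbar a -> inCbar b -> inCbar (a + b).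
Proof.
case: s a b => /= a b.
  by move=> ha hb j; rewrite mxE addr_ge0.
move=> [ha1 ha2] [hb1 hb2]; split; first by rewrite trD ha1 hb1.
by move=> v; rewrite mulmxDr mulmxDl mxE addr_ge0.
Qed.

Lemma inCDbar (R : realType) s D (a b : 'M[R]_(Edim s D, D)) :
  inC a -> inCbar b -> inC (a + b).
Proof.
case: s a b => /= a b.
  by move=> ha hb j; rewrite mxE ltr_pwDl.
move=> [ha1 ha2] [hb1 hb2]; split; first by rewrite trD ha1 hb1.
by move=> v hv; rewrite mulmxDr mulmxDl mxE ltr_pwDl // ha2.
Qed.

Lemma inEB (R : realType) s D (a b : 'M[R]_(Edim s D, D)) :
  Defs.inE a -> Defs.inE b -> Defs.inE (a - b).
Proof. by case: s a b => //= a b ha hb; rewrite trD trN ha hb. Qed.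

Lemma inEZ (R : realType) s D (c : R) (a : 'M[R]_(Edim s D, D)) :
  Defs.inE a -> Defs.inE (c *: a).
Proof. by case: s a => //= a ha; rewrite trZ ha. Qed.

Lemma inE0 (R : realType) s D : Defs.inE (0 : 'M[R]_(Edim s D, D)).
Proof. by case: s => //=; rewrite trmx0. Qed.

Lemma finmin (R : realType) n (c : 'I_n -> R) :
  (forall k, 0 < c k) -> exists e : R, 0 < e /\ forall k, e <= c k.
Proof.
move=> hc; exists (\big[Num.min/1]_k c k); split.
  by elim/big_ind: _ => // a b ha hb; rewrite lt_min ha hb.
by move=> k; rewrite (bigD1 k) //= ge_min lexx.
Qed.
Lemma cone_orth (R : realType) D (z : 'M[R]_(1, D)) :
  (forall j, 0 <= z ord0 j) ->
  exists S : 'M[R]_(1, D),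
    [/\ True, (forall j, S ord0 j = 0 \/ S ord0 j = 1), dotE S z = 0,
      (forall y : 'M[R]_(1, D), (forall j, 0 <= y ord0 j) -> 0 <= dotE S y) &
      ((~ (forall j, 0 < z ord0 j) -> S != 0) /\
      (exists c : R, 0 < c /\ forall (e : R) (A B : 'M[R]_(1, D)),
        0 < e -> e <= c -> (forall j, A ord0 j = 0 \/ A ord0 j = 1) ->
        (forall j, B ord0 j = 0 \/ B ord0 j = 1) ->
        forall j, 0 <= (z + e *: (S *+ 2 - A - B)) ord0 j))].
Proof.
move=> hz.
exists (\row_j (if z ord0 j == 0 then 1 else 0)); split => //.
- by move=> j; rewrite mxE; case: ifP; [right | left].
- rewrite /dotE big_ord1 big1 // => j _; rewrite mxE.
  by case: eqP => [->|]; rewrite ?mulr0 ?mul0r.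
- move=> y hy; rewrite /dotE big_ord1; apply: sumr_ge0 => j _; rewrite mxE.
  by case: ifP; rewrite ?mul1r ?mul0r.
split.
  move=> hn; apply/negP => /eqP h0; apply: hn => j.
  rewrite lt_def hz andbT; apply/negP => /eqP hj.
  have := congr1 (fun M : 'M[R]_(1, D) => M ord0 j) h0; rewrite /= !mxE hj eqxx.
  by move/eqP; rewrite oner_eq0.
have hpos : forall j : 'I_D, 0 < (if z ord0 j == 0 then 1 else z ord0 j / 2).
  move=> j; case: eqP => // hne; have := hz j; rewrite le_eqVlt => /orP[/eqP h|h].
    by exfalso; apply: hne.
  by rewrite divr_gt0.
have [c [hc0 hc]] := @finmin R D _ hpos.
exists c; split => // e A B he hec hA hB j.
rewrite mulr2n !mxE.
have := hc j; have := hz j.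
case: (hA j) => [->|->]; case: (hB j) => [->|->]; case: eqP => [->|hne] /= hzj hcj; nra.
Qed.
Lemma sym_sq0 (R : realType) n m (z : 'M[R]_n) (Y : 'M[R]_(n, m)) :
  z^T = z -> z *m (z *m Y) = 0 -> z *m Y = 0.
Proof.
move=> hz h; set W := z *m Y.
have hWW : W^T *m W = 0 by rewrite /W trmx_mul hz -mulmxA h mulmx0.
apply/matrixP => i k; rewrite [RHS]mxE.
have : (W^T *m W) k k = 0 by rewrite hWW mxE.
rewrite mxE => h3.
have : W^T k i * W i k = 0.
  apply: (psumr_eq0P _ h3) => // l _.
  by rewrite mxE -expr2 sqr_ge0.
by rewrite mxE => /eqP; rewrite -expr2 sqrf_eq0 => /eqP.
Qed.

Lemma symX0 (R : realType) n m (z : 'M[R]_n.+1) (Y : 'M[R]_(n.+1, m)) :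
  z^T = z -> forall k, z ^+ k.+1 *m Y = 0 -> z *m Y = 0.
Proof.
move=> hz; elim=> [|k IH]; first by rewrite expr1.
move=> h; apply: IH.
have e1 : z ^+ k.+1 *m Y = z *m (z ^+ k *m Y) by rewrite mulmxA exprS mulmxE.
have e2 : z ^+ k.+2 *m Y = z *m (z *m (z ^+ k *m Y)).
  by rewrite !mulmxA [z ^+ k.+2]exprS [z ^+ k.+1]exprS !mulmxE mulrA.
by rewrite e1; apply: (sym_sq0 hz); rewrite -e2.
Qed.

Lemma horner_sym (R : realType) n (z : 'M[R]_n.+1) :
  z^T = z -> forall p, (horner_mx z p)^T = horner_mx z p.
Proof.
move=> hz; elim/poly_ind => [|p c IH]; first by rewrite rmorph0 trmx0.
have hc : z *m horner_mx z p = horner_mx z p *m z := comm_mx_horner p (erefl _).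
rewrite rmorphD rmorphM /= horner_mx_X horner_mx_C trD -mulmxE trmx_mul hz IH.
by rewrite tr_scalar_mx hc.
Qed.

Lemma exB (R : realType) n (z : 'M[R]_n.+1) :
  z^T = z -> exists B : 'M[R]_n.+1, [/\ B^T = B, z *m B = B *m z & z *m z *m B = z].
Proof.
move=> hz.
case: (multiplicity_XsubC (char_poly z) 0) => m [q hq0 hpq].
have hp0 : char_poly z != 0 := monic_neq0 (char_poly_monic z).
rewrite hp0 /= in hq0.
have CH := Cayley_Hamilton z.
rewrite hpq rmorphM rmorphXn /= polyC0 subr0 horner_mx_X in CH.
have hzq : z *m horner_mx z q = 0.
  case: m CH hpq => [|m] CH hpq; first by rewrite expr0 mulr1 in CH; rewrite CH mulmx0.
  apply: (symX0 hz (k:=m)).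
  have hcz : comm_mx (z ^+ m.+1) z.
    by rewrite /comm_mx !mulmxE; apply/commr_sym/commrX/commr_refl.
  by rewrite (comm_mx_horner q hcz) mulmxE.
set q0 := q.[0] in hq0.
have : root (q - q0%:P) 0 by rewrite /root hornerD hornerN hornerC subrr.
case/factor_theorem => h hh.
have eq : q = h * 'X + q0%:P by rewrite -[q](subrK q0%:P) hh polyC0 subr0.
set H := horner_mx z h.
have hq : horner_mx z q = q0%:M + H * z.
  by rewrite eq rmorphD rmorphM /= horner_mx_X horner_mx_C addrC.
have hHz : H *m z = z *m H := esym (comm_mx_horner h (erefl _)).
have hzzH : z *m z *m H = - q0 *: z.
  move: hzq; rewrite hq mulmxDr mul_mx_scalar -mulmxE hHz mulmxA => /eqP.
  by rewrite addrC addr_eq0 => /eqP ->; rewrite scaleNr.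
exists (- q0^-1 *: H); split.
- by rewrite trZ horner_sym.
- by rewrite -scalemxAl -scalemxAr hHz.
- rewrite -scalemxAr hzzH scalerA mulrNN mulVf ?scale1r //.
Qed.
Definition ip {R : realType} {n : nat} (u w : 'rV[R]_n) : R := (u *m w^T) ord0 ord0.

Lemma ipE (R : realType) n (u w : 'rV[R]_n) : ip u w = \sum_k u ord0 k * w ord0 k.
Proof. by rewrite /ip mxE; apply: eq_bigr => k _; rewrite mxE. Qed.

Lemma ip_sym (R : realType) n (u w : 'rV[R]_n) : ip u w = ip w u.
Proof. by rewrite !ipE; apply: eq_bigr => k _; rewrite mulrC. Qed.

Lemma ipDl (R : realType) n (u v w : 'rV[R]_n) : ip (u + v) w = ip u w + ip v w.
Proof. by rewrite !ipE -big_split; apply: eq_bigr => k _; rewrite mxE mulrDl. Qed.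
Lemma ipNl (R : realType) n (u w : 'rV[R]_n) : ip (- u) w = - ip u w.
Proof. by rewrite !ipE -sumrN; apply: eq_bigr => k _; rewrite mxE mulNr. Qed.
Lemma ipZl (R : realType) n (a : R) (u w : 'rV[R]_n) : ip (a *: u) w = a * ip u w.
Proof. by rewrite !ipE mulr_sumr; apply: eq_bigr => k _; rewrite mxE mulrA. Qed.
Lemma ipDr (R : realType) n (u v w : 'rV[R]_n) : ip w (u + v) = ip w u + ip w v.
Proof. by rewrite ip_sym ipDl !(ip_sym w). Qed.
Lemma ipNr (R : realType) n (u w : 'rV[R]_n) : ip w (- u) = - ip w u.
Proof. by rewrite ip_sym ipNl ip_sym. Qed.
Lemma ipZr (R : realType) n (a : R) (u w : 'rV[R]_n) : ip w (a *: u) = a * ip w u.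
Proof. by rewrite ip_sym ipZl ip_sym. Qed.

Lemma ip_ge0 (R : realType) n (u : 'rV[R]_n) : 0 <= ip u u.
Proof. by rewrite ipE; apply: sumr_ge0 => k _; rewrite -expr2 sqr_ge0. Qed.

Lemma ip_eq0 (R : realType) n (u : 'rV[R]_n) : ip u u = 0 -> u = 0.
Proof.
rewrite ipE => h; apply/rowP => k; rewrite mxE.
have : u ord0 k * u ord0 k = 0.
  by apply: (psumr_eq0P _ h) => // l _; rewrite -expr2 sqr_ge0.
by move/eqP; rewrite -expr2 sqrf_eq0 => /eqP.
Qed.

Lemma ip_coord (R : realType) n (u : 'rV[R]_n) k : u ord0 k ^+ 2 <= ip u u.
Proof.
rewrite ipE (bigD1 k) //= expr2 lerDl.
by apply: sumr_ge0 => l _; rewrite -expr2 sqr_ge0.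
Qed.

Lemma ip_tr (R : realType) n (M : 'M[R]_n) (a b : 'rV[R]_n) :
  ip (a *m M) b = ip (b *m M^T) a.
Proof.
rewrite /ip; transitivity ((a *m M *m b^T)^T ord0 ord0); first by rewrite [RHS]mxE.
by rewrite trmx_mul trmxK trmx_mul mulmxA.
Qed.

Lemma ip_proj (R : realType) n (M : 'M[R]_n) (a : 'rV[R]_n) :
  M^T = M -> M *m M = M -> ip (a *m M) a = ip (a *m M) (a *m M).
Proof.
move=> h1 h2; rewrite /ip trmx_mul h1 mulmxA -[a *m M *m M]mulmxA h2.
by [].
Qed.

Lemma quad_bound (R : realType) n (M : 'M[R]_n) :
  exists C : R, 0 < C /\ forall u : 'rV[R]_n, ip (u *m M) u <= C * ip u u.
Proof.
exists (1 + \sum_i \sum_j `|M i j|); split.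
  by rewrite ltr_pwDl // sumr_ge0 // => i _; rewrite sumr_ge0.
move=> u.
have -> : ip (u *m M) u = \sum_i \sum_j u ord0 i * M i j * u ord0 j.
  rewrite ipE; under eq_bigr do rewrite mxE mulr_suml.
  by rewrite exchange_big; apply: eq_bigr => i _; apply: eq_bigr => j _.
rewrite mulrDl mul1r; apply: ler_wpDl; first exact: ip_ge0.
rewrite mulr_suml; apply: ler_sum => i _; rewrite mulr_suml; apply: ler_sum => j _.
have h1 := ip_coord u i; have h2 := ip_coord u j.
set a := u ord0 i in h1 *; set b := u ord0 j in h2 *; set S := ip u u in h1 h2 *.
have hab : a * b <= S by nra.
have hab' : - (a * b) <= S by nra.
case: (lerP 0 (M i j)) => hm.
  by rewrite ger0_norm //; nra.
by rewrite ltr0_norm //; nra.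
Qed.
Lemma cbound (R : realType) n (z B : 'M[R]_n) :
  z^T = z -> (forall v : 'rV[R]_n, 0 <= ip (v *m z) v) -> B^T = B ->
  z *m B = B *m z -> z *m z *m B = z ->
  exists c : R, 0 < c /\
    forall w : 'rV[R]_n, c * ip (w *m (z *m B)) (w *m (z *m B)) <= ip (w *m z) w.
Proof.
move=> hz hpos hB hc hzzB.
set Q := z *m B.
have hQt : Q^T = Q by rewrite /Q trmx_mul hB hz hc.
have hQQ : Q *m Q = Q.
  rewrite /Q mulmxA -[z *m B *m z]mulmxA -hc mulmxA hzzB //.
have hBzB : B *m z *m B = Q *m B *m Q.
  rewrite -hc /Q !mulmxA -[z *m B *m B *m z]mulmxA -hc mulmxA.
  by rewrite -[z *m B *m z]mulmxA -hc mulmxA hzzB.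
have [C [hC hCb]] := quad_bound B.
exists C^-1; split; first by rewrite invr_gt0.
move=> w; set u := w *m B.
have hq := hpos (w + (- C^-1) *: u).
rewrite mulmxDl ipDl !ipDr -scalemxAl !ipZl !ipZr in hq.
have f1 : ip (w *m z) u = ip (w *m Q) (w *m Q).
  rewrite -ip_proj //; rewrite /ip /u trmx_mul hB !mulmxA //.
have f2 : ip (u *m z) w = ip (w *m z) u by rewrite ip_tr hz.
have f3 : ip (u *m z) u = ip (w *m Q *m B) (w *m Q).
  rewrite /ip /u [(w *m B)^T]trmx_mul [(w *m Q)^T]trmx_mul hB hQt.
  have e1 : w *m B *m z *m (B *m w^T) = w *m (B *m z *m B) *m w^T by rewrite !mulmxA.
  have e2 : w *m Q *m B *m (Q *m w^T) = w *m (Q *m B *m Q) *m w^T by rewrite !mulmxA.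
  by rewrite e1 e2 hBzB.
rewrite f2 f1 f3 in hq.
have hb := hCb (w *m Q).
set b := ip (w *m Q) (w *m Q) in hq hb *.
set cc := ip (w *m Q *m B) (w *m Q) in hq hb.
set q := ip (w *m z) w in hq *.
set y := C^-1 in hq *.
have hy : y * C = 1 by rewrite /y mulVf ?gt_eqF.
have hy0 : 0 < y by rewrite /y invr_gt0.
have h3 : y ^+ 2 * cc <= y ^+ 2 * (C * b) by rewrite ler_wpM2l // exprn_ge0 // ltW.
have h4 : y ^+ 2 * (C * b) = y * b by rewrite expr2 -mulrA (mulrA y C) hy mul1r.
nra.
Qed.
Lemma proj_ineq (R : realType) n (P A : 'M[R]_n) (v : 'rV[R]_n) :
  P^T = P -> P *m P = P -> A^T = A -> A *m A = A ->
  - ip (v - v *m P) (v - v *m P) <= ip (v *m P) v - ip (v *m A) v.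
Proof.
move=> hP1 hP2 hA1 hA2.
rewrite (ip_proj _ hP1 hP2) (ip_proj _ hA1 hA2).
set p := v *m P; set r := v - p; set X := v *m A.
have hv : v = p + r by rewrite /r addrC subrK.
have hpr : ip p r = 0.
  by rewrite /r ipDr ipNr /p -(ip_proj _ hP1 hP2) subrr.
have hXX : ip X X = ip X p + ip X r by rewrite -(ip_proj _ hA1 hA2) -/X {1}hv ipDr.
clearbody p r X.
have h0 := ip_ge0 (p - X + r).
rewrite !ipDl !ipDr !ipNl !ipNr in h0.
rewrite ?(ip_sym r p) ?(ip_sym X p) ?(ip_sym r X) in h0.
rewrite (ip_sym X p) in hXX.
lra.
Qed.

Lemma cone_psd (R : realType) n (z : 'M[R]_n.+1) :
  z^T = z /\ (forall v : 'rV[R]_n.+1, 0 <= (v *m z *m v^T) ord0 ord0) ->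
  exists S : 'M[R]_n.+1,
    [/\ S^T = S, S^T = S /\ S *m S = S, dotE S z = 0,
      (forall y : 'M[R]_n.+1, y^T = y /\ (forall v : 'rV[R]_n.+1, 0 <= (v *m y *m v^T) ord0 ord0) ->
         0 <= dotE S y) &
      ((~ (z^T = z /\ forall v : 'rV[R]_n.+1, v != 0 -> 0 < (v *m z *m v^T) ord0 ord0) -> S != 0) /\
      (exists c : R, 0 < c /\ forall (e : R) (A B : 'M[R]_n.+1),
        0 < e -> e <= c -> A^T = A /\ A *m A = A -> B^T = B /\ B *m B = B ->
        (z + e *: (S *+ 2 - A - B))^T = z + e *: (S *+ 2 - A - B) /\
        forall v : 'rV[R]_n.+1, 0 <= (v *m (z + e *: (S *+ 2 - A - B)) *m v^T) ord0 ord0))].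
Proof.
move=> [hz hzp].
have [B [hB hc hzzB]] := exB hz.
set Q := z *m B.
have hQt : Q^T = Q by rewrite /Q trmx_mul hB hz hc.
have hQQ : Q *m Q = Q.
  rewrite /Q mulmxA -[z *m B *m z]mulmxA -hc mulmxA hzzB //.
set P := 1%:M - Q.
have hPt : P^T = P by rewrite /P trD trN tr_scalar_mx hQt.
have hPP : P *m P = P.
  by rewrite /P mulmxBl mul1mx mulmxBr mulmx1 hQQ subrr subr0.
have hzP : z *m P = 0 by rewrite /P mulmxBr mulmx1 /Q mulmxA hzzB subrr.
have hPz : P *m z = 0 by rewrite -[P]hPt -[z]hz -trmx_mul hzP trmx0.
have hpos : forall v : 'rV[R]_n.+1, 0 <= ip (v *m z) v by move=> v; apply: hzp.
have [c [hc0 hcb]] := cbound hz hpos hB hc hzzB.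
have hvQ : forall v : 'rV[R]_n.+1, v *m Q = v - v *m P.
  by move=> v; rewrite /P mulmxBr mulmx1 opprB addrC subrK.
clearbody P.
exists P; split; [exact: hPt | by split | | | ].
- rewrite /dotE big1 // => i _.
  transitivity ((P *m z) i i); last by rewrite hPz mxE.
  by rewrite mxE; apply: eq_bigr => j _; rewrite -{1}hz mxE.
- move=> y [hy hyp].
  have hPij : forall i j, P i j = \sum_k P k i * P k j.
    move=> i j; have := congr1 (fun M : 'M[R]_n.+1 => M i j) hPP.
    rewrite -{1}hPt mxE => <-; apply: eq_bigr => k _; rewrite mxE.
    by [].
  have -> : dotE P y = \sum_k ip (row k P *m y) (row k P).
    rewrite /dotE.
    transitivity (\sum_k \sum_i \sum_j P k i * y i j * P k j).
      under eq_bigr => i _ do under eq_bigr => j _ do rewrite hPij mulr_suml.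
      under eq_bigr => i _ do rewrite exchange_big.
      rewrite exchange_big; apply: eq_bigr => k _; apply: eq_bigr => i _.
      by apply: eq_bigr => j _; ring.
    apply: eq_bigr => k _; rewrite ipE.
    under [RHS]eq_bigr => j _ do rewrite !mxE mulr_suml.
    rewrite [RHS]exchange_big; apply: eq_bigr => i _; apply: eq_bigr => j _.
    by rewrite !mxE.
  by apply: sumr_ge0 => k _; apply: hyp.
split.
  move=> hn; apply/negP => /eqP hP0; apply: hn; split => // v hv.
  have := hcb v; rewrite hvQ hP0 mulmx0 subr0 => h.
  apply: lt_le_trans h; rewrite mulr_gt0 // lt_def ip_ge0 andbT.
  by apply/negP => /eqP /ip_eq0 /eqP; apply/negP.
exists (c / 4); split; first by rewrite divr_gt0.
move=> e A B' he hec [hA1 hA2] [hB1 hB2]; split.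
  by rewrite !mulr2n trD trZ !trD !trN hPt hA1 hB1 hz.
move=> v.
have -> : (v *m (z + e *: (P *+ 2 - A - B')) *m v^T) ord0 ord0 =
    ip (v *m z) v + e * ((ip (v *m P) v - ip (v *m A) v) + (ip (v *m P) v - ip (v *m B') v)).
  rewrite -/(ip (v *m (z + e *: (P *+ 2 - A - B'))) v).
  rewrite mulmxDr ipDl -scalemxAr ipZl mulr2n !mulmxDr !mulmxN !ipDl !ipNl.
  by congr (_ + _ * _); lra.
have h1 := proj_ineq v hPt hPP hA1 hA2.
have h2 := proj_ineq v hPt hPP hB1 hB2.
have h3 := hcb v; rewrite hvQ in h3.
have h4 := ip_ge0 (v - v *m P).
set rr := ip (v - v *m P) (v - v *m P) in h1 h2 h3 h4.
nra.
Qed.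
Lemma cone_S (R : realType) s D (hD : (0 < D)%N) (z : 'M[R]_(Edim s D, D)) :
  inCbar z ->
  exists S : 'M[R]_(Edim s D, D),
    [/\ Defs.inE S, Adm S, dotE S z = 0,
      (forall y, inCbar y -> 0 <= dotE S y) & ((~ inC z -> S != 0) /\
      (exists c : R, 0 < c /\ forall (e : R) (A B : 'M[R]_(Edim s D, D)),
        0 < e -> e <= c -> Adm A -> Adm B -> inCbar (z + e *: (S *+ 2 - A - B))))].
Proof.
case: s z => z hz.
  exact: (cone_orth hz).
case: D hD z hz => // D _ z hz.
exact: (cone_psd hz).
Qed.
Definition compn (R : realType) s K D (n : nat) (v : EK R s K D) : 'M[R]_(Edim s D, D) :=
  oapp (fun k : 'I_K => Defs.comp k v) 0 (insub n).
Definition prevn (R : realType) s K D (n : nat) (v : EK R s K D) : 'M[R]_(Edim s D, D) :=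
  if n is n'.+1 then compn n' v else 0.
Definition zn (R : realType) s K D (n : nat) (v : EK R s K D) := compn n v - prevn n v.
Definition Sn (R : realType) s K D (S : 'I_K -> 'M[R]_(Edim s D, D)) (n : nat) :=
  oapp S 0 (insub n).
Definition mkEK (R : realType) s K D (F : 'I_K -> 'M[R]_(Edim s D, D)) : EK R s K D :=
  \matrix_(r, j) (mxvec (\matrix_(k < K, i < Edim s D) F k i j)) ord0 r.

Lemma comp_mkEK (R : realType) s K D (F : 'I_K -> 'M[R]_(Edim s D, D)) k :
  Defs.comp k (mkEK F) = F k.
Proof. by apply/matrixP => i j; rewrite !mxE mxvecE mxE. Qed.

Lemma compn_ord (R : realType) s K D (k : 'I_K) (v : EK R s K D) : compn k v = Defs.comp k v.
Proof. by rewrite /compn valK. Qed.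

Lemma Sn_ord (R : realType) s K D (S : 'I_K -> 'M[R]_(Edim s D, D)) (k : 'I_K) : Sn S k = S k.
Proof. by rewrite /Sn valK. Qed.

Lemma compn_out (R : realType) s K D n (v : EK R s K D) : (K <= n)%N -> compn n v = 0.
Proof. by move=> h; rewrite /compn insubF // ltnNge h. Qed.

Lemma Sn_out (R : realType) s K D (S : 'I_K -> 'M[R]_(Edim s D, D)) n :
  (K <= n)%N -> Sn S n = 0.
Proof. by move=> h; rewrite /Sn insubF // ltnNge h. Qed.

Lemma compD (R : realType) s K D k (a b : EK R s K D) : Defs.comp k (a + b) = Defs.comp k a + Defs.comp k b.
Proof. by apply/matrixP => i j; rewrite !mxE. Qed.
Lemma compZ (R : realType) s K D k (c : R) (a : EK R s K D) : Defs.comp k (c *: a) = c *: Defs.comp k a.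
Proof. by apply/matrixP => i j; rewrite !mxE. Qed.
Lemma compB (R : realType) s K D k (a b : EK R s K D) : Defs.comp k (a - b) = Defs.comp k a - Defs.comp k b.
Proof. by apply/matrixP => i j; rewrite !mxE. Qed.

Lemma compnD (R : realType) s K D n (a b : EK R s K D) :
  compn n (a + b) = compn n a + compn n b.
Proof. by rewrite /compn; case: insub => [k|] /=; rewrite ?compD ?addr0. Qed.
Lemma compnZ (R : realType) s K D n (c : R) (a : EK R s K D) :
  compn n (c *: a) = c *: compn n a.
Proof. by rewrite /compn; case: insub => [k|] /=; rewrite ?compZ ?scaler0. Qed.

Lemma dotEK_sum (R : realType) s K D (x y : EK R s K D) :
  dotEK x y = \sum_(k < K) dotE (Defs.comp k x) (Defs.comp k y).
Proof.
rewrite /dotEK /dotE (reindex _ (curry_mxvec_bij _ _)) /= [RHS]pair_bigA /=.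
by apply: eq_bigr => -[k i] _ /=; apply: eq_bigr => j _; rewrite !mxE.
Qed.
Lemma compn_lt (R : realType) s K D n (h : (n < K)%N) (v : EK R s K D) :
  compn n v = Defs.comp (Ordinal h) v.
Proof. exact: (compn_ord (Ordinal h) v). Qed.

Lemma Sn_lt (R : realType) s K D (S : 'I_K -> 'M[R]_(Edim s D, D)) n (h : (n < K)%N) :
  Sn S n = S (Ordinal h).
Proof. exact: (Sn_ord S (Ordinal h)). Qed.

Lemma Ubar_zn (R : realType) s K D (x : EK R s K D) :
  Ubar s K D x -> forall k : 'I_K, inCbar (zn k x).
Proof.
move=> [h1 h2] k; rewrite /zn; case E: (nat_of_ord k) => [|k'] /=.
  by rewrite subr0 -E compn_ord.
have hk : (k'.+1 < K)%N by rewrite -E.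
have hk' : (k' < K)%N by rewrite ltnW.
by rewrite (compn_lt hk) (compn_lt hk'); apply: (h2 (Ordinal hk') hk).
Qed.

Lemma zn_Ubar (R : realType) s K D (x : EK R s K D) :
  (forall k : 'I_K, inCbar (zn k x)) -> Ubar s K D x.
Proof.
move=> hz; split.
  have H : forall n, (n < K)%N -> inCbar (compn n x).
    elim=> [|n IH] hn; first by have := hz (Ordinal hn); rewrite /zn /= subr0.
    have := hz (Ordinal hn); rewrite /zn /= => hzn.
    rewrite -(subrK (compn n x) (compn n.+1 x)); apply: inCbarD => //.
    by apply: IH; rewrite ltnW.
  by move=> k; rewrite -compn_ord; apply: H.
move=> k h; have := hz (Ordinal h); rewrite /zn /= (compn_lt h) compn_ord.
by [].
Qed.

Lemma bdU_zn (R : realType) s K D (x : EK R s K D) :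
  bdU s K D x -> exists k : 'I_K, ~ inC (zn k x).
Proof.
move=> [hU hnU]; apply: contrapT => hne; apply: hnU.
have hz : forall k : 'I_K, inC (zn k x).
  by move=> k; apply: contrapT => hk; apply: hne; exists k.
split.
  have H : forall n, (n < K)%N -> inC (compn n x).
    elim=> [|n IH] hn; first by have := hz (Ordinal hn); rewrite /zn /= subr0.
    have := hz (Ordinal hn); rewrite /zn /= => hzn.
    have hn' : (n < K)%N by rewrite ltnW.
    rewrite -(subrK (compn n x) (compn n.+1 x)); apply: inCDbar => //.
    by rewrite (compn_lt hn'); apply: hU.1.
  by move=> k; rewrite -compn_ord; apply: H.
move=> k h; have := hz (Ordinal h); rewrite /zn /= (compn_lt h) compn_ord.
by [].
Qed.

Lemma dotEK_mk (R : realType) s K D (S : 'I_K -> 'M[R]_(Edim s D, D)) (v : EK R s K D) :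
  dotEK (mkEK (fun k : 'I_K => Sn S k - Sn S k.+1)) v =
  \sum_(k < K) dotE (S k) (zn k v).
Proof.
rewrite dotEK_sum.
under eq_bigr do rewrite comp_mkEK dotEBl -compn_ord.
under [RHS]eq_bigr do rewrite -Sn_ord /zn dotEBr.
rewrite !sumrB; congr (_ - _).
pose G k := dotE (Sn S k) (prevn k v).
rewrite -(big_mkord xpredT (fun k => dotE (Sn S k.+1) (compn k v))).
rewrite -(big_mkord xpredT G).
have -> : \sum_(0 <= k < K) dotE (Sn S k.+1) (compn k v) = \sum_(0 <= k < K) G k.+1 by [].
have G0 : G 0%N = 0 by rewrite /G /= dotE0r.
have GK : G K = 0 by rewrite /G Sn_out // dotE0l.
have e : \sum_(0 <= i < K.+1) G i = G 0%N + \sum_(0 <= i < K) G i.+1.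
  exact: big_nat_recl.
have e' : \sum_(0 <= i < K.+1) G i = \sum_(0 <= i < K) G i + G K.
  exact: big_nat_recr.
by move: e e'; rewrite G0 GK add0r addr0 => <-.
Qed.




Lemma dotEK_Zl (R : realType) s K D (a : R) (x y : EK R s K D) :
  dotEK (a *: x) y = a * dotEK x y.
Proof.
rewrite /dotEK mulr_sumr; apply: eq_bigr => i _; rewrite mulr_sumr.
by apply: eq_bigr => j _; rewrite mxE mulrA.
Qed.

Lemma dotEK_Zr (R : realType) s K D (a : R) (x y : EK R s K D) :
  dotEK x (a *: y) = a * dotEK x y.
Proof.
rewrite /dotEK mulr_sumr; apply: eq_bigr => i _; rewrite mulr_sumr.
by apply: eq_bigr => j _; rewrite mxE mulrCA.
Qed.

Lemma dotEK_sym (R : realType) s K D (x y : EK R s K D) : dotEK x y = dotEK y x.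
Proof. by apply: eq_bigr => i _; apply: eq_bigr => j _; rewrite mulrC. Qed.

Lemma dotEK_Bl (R : realType) s K D (x y z : EK R s K D) :
  dotEK (x - y) z = dotEK x z - dotEK y z.
Proof.
rewrite /dotEK -sumrB; apply: eq_bigr => i _; rewrite -sumrB.
by apply: eq_bigr => j _; rewrite !mxE mulrBl.
Qed.

Lemma dotEK_ge0 (R : realType) s K D (x : EK R s K D) : 0 <= dotEK x x.
Proof. by apply: sumr_ge0 => i _; apply: sumr_ge0 => j _; rewrite -expr2 sqr_ge0. Qed.

Lemma dotEK_eq0 (R : realType) s K D (x : EK R s K D) : dotEK x x = 0 -> x = 0.
Proof.
move=> h; apply/matrixP => i j; rewrite mxE.
have h1 : forall i, \sum_(j < D) x i j * x i j = 0.
  move=> i'; move: h; rewrite /dotEK => /psumr_eq0P; apply => //.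
  by move=> k _; apply: sumr_ge0 => l _; rewrite -expr2 sqr_ge0.
have : x i j * x i j = 0.
  by apply: (psumr_eq0P _ (h1 i)) => // l _; rewrite -expr2 sqr_ge0.
by move/eqP; rewrite -expr2 sqrf_eq0 => /eqP.
Qed.

Lemma compn_mk (R : realType) s K D (S : 'I_K -> 'M[R]_(Edim s D, D)) n :
  compn n (mkEK (fun k : 'I_K => Sn S k - Sn S k.+1)) = Sn S n - Sn S n.+1.
Proof.
rewrite /compn; case: insubP => [k _ <-|] /=; first by rewrite comp_mkEK.
move=> hn; rewrite !Sn_out ?subr0 //; first by rewrite ltnW // ltnNge; move: hn; case: leqP.
by move: hn; case: leqP.
Qed.

Lemma znD (R : realType) s K D n (a b : EK R s K D) : zn n (a + b) = zn n a + zn n b.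
Proof.
rewrite /zn /prevn compnD; case: n => [|n]; rewrite ?compnD; apply/matrixP => i j;
by rewrite !mxE; ring.
Qed.

Lemma znZ (R : realType) s K D n (c : R) (a : EK R s K D) : zn n (c *: a) = c *: zn n a.
Proof.
rewrite /zn /prevn compnZ; case: n => [|n]; rewrite ?compnZ; apply/matrixP => i j;
by rewrite !mxE; ring.
Qed.
Lemma Sn_inE (R : realType) s K D (S : 'I_K -> 'M[R]_(Edim s D, D)) n :
  (forall k, Defs.inE (S k)) -> Defs.inE (Sn S n).
Proof. by move=> h; rewrite /Sn; case: insub => [k|] /=; [apply: h | apply: inE0]. Qed.

Lemma Sn_Adm (R : realType) s K D (S : 'I_K -> 'M[R]_(Edim s D, D)) n :
  (forall k, Adm (S k)) -> Adm (Sn S n).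
Proof. by move=> h; rewrite /Sn; case: insub => [k|] /=; [apply: h | apply: Adm0]. Qed.

Lemma zn_mk (R : realType) s K D (S : 'I_K -> 'M[R]_(Edim s D, D)) n :
  zn n (mkEK (fun k : 'I_K => Sn S k - Sn S k.+1)) =
  Sn S n *+ 2 - Sn S n.+1 - (if n is n'.+1 then Sn S n' else Sn S 0%N).
Proof.
rewrite /zn /prevn compn_mk; case: n => [|n]; rewrite ?compn_mk;
by apply/matrixP => i j; rewrite !mxE; ring.
Qed.

Unset Implicit Arguments.

Theorem proposition3p6 (R : realType) (s : setting) (D K : nat)
  (hD : (1 <= D)%N) (hK : (1 <= K)%N)
  (T : \bar R) (hT : (0%:E < T)%E)
  (f : R * EK R s K D -> R)
  (hfc : {within [set p : R * EK R s K D | 0 <= p.1 /\ (p.1%:E < T)%E /\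
                                            Ubar s K D p.2],
          continuous f})
  (hft : tilted T f)
  (t : R) (x : EK R s K D)
  (ht : 0 < t) (htT : (t%:E < T)%E) (hx : bdU s K D x)
  (phi : R * EK R s K D -> R)
  (hphi : exists O : set (R * EK R s K D),
      [set p | 0 < p.1 /\ (p.1%:E < T)%E /\ Ubar s K D p.2] `<=` O /\
      smooth_on O phi)
  (hmax : \forall p \near (t, x),
      (0 < p.1 /\ (p.1%:E < T)%E /\ Ubar s K D p.2) ->
      f p - phi p <= f (t, x) - phi (t, x)) :
  (ereal_inf [set (dot_grad phi t x nu)%:E | nu in normals x] <= 0%:E)%E.
Proof.
case: hphi => O [hsub [hO hdiff]].
have hxU := hx.1.
have hzx := Ubar_zn hxU.
have [S hS] := fin_all_exists (fun k : 'I_K => cone_S hD (hzx k)).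
have hSE : forall k, Defs.inE (S k) by move=> k; case: (hS k).
have hSA : forall k, Adm (S k) by move=> k; case: (hS k).
have hSz : forall k, dotE (S k) (zn k x) = 0 by move=> k; case: (hS k).
have hSy : forall k y, inCbar y -> 0 <= dotE (S k) y by move=> k; case: (hS k).
have hS0 : forall k : 'I_K, ~ inC (zn k x) -> S k != 0 by move=> k; case: (hS k) => _ _ _ _ [].
have [c hc] := fin_all_exists (fun k : 'I_K => let: And5 _ _ _ _ (conj _ h) := hS k in h).
have [e0 [he0 he0c]] := finmin (fun k => (hc k).1).
pose d := mkEK (fun k : 'I_K => Sn S k - Sn S k.+1).
have hdx : dotEK d x = 0 by rewrite dotEK_mk big1.
have hdv : forall v, Ubar s K D v -> 0 <= dotEK d v.
  by move=> v hv; rewrite dotEK_mk; apply: sumr_ge0 => k _; apply: hSy; apply: Ubar_zn.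
have hdE : forall k, Defs.inE (Defs.comp k d).
  by move=> k; rewrite comp_mkEK; apply: inEB; apply: Sn_inE.
have hd0 : d != 0.
  have [k0 hk0] := bdU_zn hx.
  apply/negP => /eqP hd.
  have hSS : forall n, Sn S n = Sn S n.+1.
    move=> n; apply/eqP; rewrite -subr_eq0; apply/eqP.
    by rewrite -compn_mk -/d hd /compn; case: insub => [k|] //=; apply/matrixP => i j; rewrite !mxE.
  have hSm : forall m n, Sn S n = Sn S (n + m).
    by elim=> [|m IH] n; rewrite ?addn0 // IH hSS addnS.
  by move: (hS0 k0 hk0); rewrite -Sn_ord (hSm K) Sn_out ?leq_addl // eqxx.
have hU : forall h, 0 < h -> h <= e0 -> Ubar s K D (h *: d + x).
  move=> h h0 hle; apply: zn_Ubar => k.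
  rewrite znD znZ zn_mk addrC Sn_ord.
  apply: ((hc k).2 h) => //; first exact: le_trans hle (he0c k).
    exact: Sn_Adm.
  by case: (nat_of_ord k) => [|n]; apply: Sn_Adm.
have hdd : 0 < dotEK d d.
  rewrite lt_def dotEK_ge0 andbT; apply/eqP => /dotEK_eq0 h0.
  by move: hd0; rewrite h0 eqxx.
set nd := normEK d.
have hnd : 0 < nd by rewrite /nd /normEK sqrtr_gt0.
have hnd2 : nd ^+ 2 = dotEK d d by rewrite /nd /normEK sqr_sqrtr // ltW.
pose nu := (- nd^-1) *: d.
have hnu : normals x nu.
  split; [|split].
  - by move=> k; rewrite compZ; apply: inEZ.
  - rewrite /normEK dotEK_Zl dotEK_Zr -hnd2.
    have -> : - nd^-1 * (- nd^-1 * nd ^+ 2) = 1.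
      by field; rewrite gt_eqF.
    by rewrite sqrtr1.
  - move=> y hy; rewrite dotEK_Zr dotEK_Bl (dotEK_sym x) hdx subr0 dotEK_sym.
    rewrite mulNr oppr_le0; apply: mulr_ge0; first by rewrite invr_ge0 ltW.
    exact: hdv.
apply: ereal_inf_le; exists (dot_grad phi t x nu)%:E; first by exists nu.
rewrite lee_fin /dot_grad.
have hdf : differentiable phi (t, x).
  by apply: (hdiff [::]); apply: hsub; split => //; split.
have -> : ((0:R), nu) = (- nd^-1) *: ((0:R), d).
  by congr pair => /=; rewrite scaler0.
rewrite deriveE // linearZ /= -deriveE //.
change (- nd^-1 * 'D_((0:R), d) phi (t, x) <= 0).
rewrite mulNr oppr_le0; apply: mulr_ge0; first by rewrite invr_ge0 ltW.
have hder := diff_derivable (v := ((0:R), d)) hdf.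
have H2 := cvg_dnbhs_at_right hder.
have Hc : (fun h : R => (t, h *: d + x)) @ 0^'+ --> (t, x).
  apply: cvg_at_right_filter.
  have -> : (fun h : R => (t, h *: d + x)) = (fun h : R => h *: ((0:R), d) + (t, x)).
    by apply: funext => h; congr pair => /=; rewrite scaler0 add0r.
  have {2}-> : (t, x) = 0 *: ((0:R), d) + (t, x) by rewrite scale0r add0r.
  apply: cvgD; last exact: cvg_cst.
  by apply: cvgZr_tmp; exact: cvg_id.
have hm := Hc _ hmax.
suff : [set r : R | 0 <= r] (lim (h^-1 *: ((phi \o shift (t, x)) (h *: ((0:R), d)) - phi (t, x)) @[h --> 0^'])) by [].
apply: (closed_cvg [set r : R | 0 <= r] (@closed_ge R 0) _ _ H2).
near=> h.
have h0 : 0 < h by near: h; exact: nbhs_right_gt.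
have he : h < e0 by near: h; exact: nbhs_right_lt.
have hP : 0 < t /\ (t%:E < T)%E /\ Ubar s K D (h *: d + x) ->
    f (t, h *: d + x) - phi (t, h *: d + x) <= f (t, x) - phi (t, x).
  by near: h; exact: hm.
have hUh := hU h h0 (ltW he).
have h1 := hP (conj ht (conj htT hUh)).
have hdual : Ubar_dual s K D (h *: d + x - x).
  rewrite addrK; split; first by move=> k; rewrite compZ; apply: inEZ.
  by move=> v hv; rewrite dotEK_Zl; apply: mulr_ge0; [exact: ltW | exact: hdv].
have h2 := hft t (ltW ht) htT x (h *: d + x) hxU hUh hdual.
have -> : (phi \o shift (t, x)) (h *: ((0:R), d)) = phi (t, h *: d + x).
  by rewrite /= /shift; congr phi; congr pair => /=; rewrite scaler0 add0r.
change (0 <= h^-1 * (phi (t, h *: d + x) - phi (t, x))).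
apply: mulr_ge0; first by rewrite invr_ge0 ltW.
rewrite subr_ge0; lra.
Unshelve. all: by end_near.
Qed.
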